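(* Let $G=(V,E)$ with weight function $w$ be a Frobenius instance with parameter $k$, with parts $V_1,\dots,V_\ell$ and layer weights $w_1,\dots,w_\ell$. Then $G$ has a closed set $S\subseteq V$ with $w(S)=k$ if and only if $\gcd(w_1,\dots,w_\ell)$ divides $k$.
   Context: For a directed graph $G=(V,E)$, a set $S\subseteq V$ is closed if for every edge $(u,v)\in E$, $u\in S$ implies $v\in S$. $D(v)$ denotes the set of vertices reachable from $v$ by a directed path, including $v$ itself. For a set $S$, $w(S)=\sum_{v\in S}w(v)$. A Frobenius instance with parameter $k\in\mathbb{N}$ is a directed graph $G=(V,E)$ with weight function $w:V\to\mathbb{N}$ and a partition $V=V_1\cup\cdots\cup V_\ell$ satisfying the following four conditions: (P1) there are weights $w_1,\dots,w_\ell$ with $w(v)=w_i$ for all $v\in V_i$ and all $i\in[\ell]$; (P2) every edge $(u,v)\in E$ has $u\in V_i$ and $v\in V_j$ for some $\ell\ge i>j\ge1$; (P3) $|V_i|\ge k$ for all $i\in[\ell]$; (P4) $w(D(v))\le\sqrt{k/2}$ for all $v\in V$. *)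

(* Defs.v *)
From mathcomp Require Import all_boot.
Set Implicit Arguments. Unset Strict Implicit. Unset Printing Implicit Defensive.

Definition wsum (V : finType) (w : V -> nat) (S : {set V}) : nat :=
  \sum_(v in S) w v.

Definition closed_set (V : finType) (E : rel V) (S : {set V}) : Prop :=
  forall u v, E u v -> u \in S -> v \in S.

Definition reach (V : finType) (E : rel V) (v : V) : {set V} :=
  [set u | connect E v u].

(* Frobenius instance with parameter k.  Layers V_1..V_l are encoded as
   V_(i+1) = {v | lay v = i} for i : 'I_l, with layer weights wl. *)
Definition frobenius_instance (V : finType) (E : rel V) (w : V -> nat)
    (l : nat) (lay : V -> 'I_l) (wl : 'I_l -> nat) (k : nat) : Prop :=
  (forall v, w v = wl (lay v)) /\
  (forall u v, E u v -> (lay v < lay u)%N) /\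
  (forall i : 'I_l, k <= #|[set v | lay v == i]|) /\
  (* (P4): w(D(v)) <= sqrt(k/2)  <=>  2 * w(D(v))^2 <= k  (w(D(v)) natural) *)
  (forall v, 2 * (wsum w (reach E v)) ^ 2 <= k).

(* Main.v *)
Require Import Defs.
From mathcomp Require Import all_boot.
From mathcomp Require Import zify.
Set Implicit Arguments. Unset Strict Implicit. Unset Printing Implicit Defensive.

Lemma wsum_sub (V : finType) (w : V -> nat) (A B : {set V}) :
  A \subset B -> wsum w A <= wsum w B.
Proof.
move=> AB; rewrite /wsum (big_setID A (A:=B)).
by rewrite (setIidPr AB) leq_addr.
Qed.

Lemma wsum_U (V : finType) (w : V -> nat) (A B : {set V}) :
  wsum w (A :|: B) <= wsum w A + wsum w B.
Proof.
rewrite /wsum (big_setID A (A:=A :|: B)).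
have -> : (A :|: B) :&: A = A by apply/setIidPr; exact: subsetUl.
rewrite leq_add2l; apply: (wsum_sub w); apply/subsetP => x.
by rewrite !inE => /andP [/negPf -> ].
Qed.

Lemma wsum_bigcup (V : finType) (w : V -> nat) (Y : {set V}) (F : V -> {set V}) :
  wsum w (\bigcup_(v in Y) F v) <= \sum_(v in Y) wsum w (F v).
Proof.
apply: (big_ind2 (fun S m => wsum w S <= m)).
- by rewrite /wsum big_set0.
- move=> x1 x2 y1 y2 h1 h2; apply: leq_trans (wsum_U w x1 y1) _.
  exact: leq_add.
- by [].
Qed.

Lemma sub_card (V : finType) (A : {set V}) m :
  m <= #|A| -> exists Y : {set V}, Y \subset A /\ #|Y| = m.
Proof.
elim: m => [|m IH] H.
  by exists set0; rewrite sub0set cards0.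
have [Y [YA cY]] := IH (ltnW H).
have : 0 < #|A :\: Y| by rewrite cardsD (setIidPr YA) cY subn_gt0.
case/card_gt0P => x; rewrite !inE => /andP [xY xA].
exists (x |: Y); split.
  by rewrite subUset sub1set xA YA.
by rewrite cardsU1 xY cY.
Qed.

Lemma aux2 (c0 R Q q x a G m : nat) : c0 + R + Q*q = x + q*c0 -> q*a = G*m -> Q*m*G + (c0+R)*a = c0*m*G + x*a.
Proof.
move=> e qa.
have e2 : (c0 + R + Q*q)*a = (x + q*c0)*a by rewrite e.
rewrite !mulnDl -[Q*q*a]mulnA -[q*c0*a]mulnAC qa in e2.
have -> : Q*m*G = Q*(G*m) by rewrite mulnAC mulnA.
have -> : c0*m*G = G*m*c0 by rewrite mulnC mulnA mulnAC.
lia.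
Qed.

Lemma arith (G a t c0 : nat) : 0 < G -> gcdn G a %| t ->
  exists y, y < G %/ gcdn G a /\ (c0 + y) * a = t %[mod G].
Proof.
move=> G0 gt.
set g := gcdn G a.
have g0 : 0 < g by rewrite gcdn_gt0 G0.
have [a' _ Ha'] := Bezoutr a G0.
set x := a' * (G - 1) * (t %/ g).
have Hx : x * a = t %[mod G].
  have e1 : G %| (x * a + t * (G - 1)).
    have -> : x * a + t * (G - 1) = (g + a' * a) * ((G - 1) * (t %/ g)).
      rewrite /x; have := divnK gt; rewrite -/g; move: (t %/ g) => s <-.
      nia.
    by rewrite dvdn_mulr // /g gcdnC.
  have e2 : x * a + t * (G - 1) + t = x * a + t * G.
    by rewrite -addnA -mulnSr subn1 prednK.
  have : (x * a + t * (G - 1) + t) %% G = t %% G.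
    by rewrite -modnDml (eqP e1) add0n.
  by rewrite e2 addnC modnMDl.
set q := G %/ g.
have q0 : 0 < q by rewrite divn_gt0 // dvdn_leq // dvdn_gcdl.
set z := x + q * c0 - c0.
exists (z %% q); split; first by rewrite ltn_mod.
have qa : q * a = G * (a %/ g).
  by rewrite /q divn_mulAC ?dvdn_gcdl // muln_divA // dvdn_gcdr.
have ez : c0 + z %% q + (z %/ q) * q = x + q * c0.
  have hz : z + c0 = x + q * c0.
    rewrite /z subnK //; apply: leq_trans (leq_addl _ _); exact: leq_pmull.
  by rewrite -hz [in RHS](divn_eq z q) addnC [_ + z %% q]addnC addnA.
rewrite -Hx.
move: ez; move: (z %/ q) (z %% q) => Q R ez.
rewrite -(modnMDl (Q * (a %/ g)) ((c0 + R) * a)) -(modnMDl (c0 * (a %/ g)) (x * a)).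
by rewrite (aux2 ez qa).
Qed.

Lemma arith2 (Gj a B y : nat) : 0 < Gj -> Gj <= B -> y < Gj %/ gcdn Gj a ->
  y + (B %/ Gj - 1) <= B %/ gcdn Gj a - 1.
Proof.
move=> G0 GB hy.
set g := gcdn Gj a.
have g0 : 0 < g by rewrite gcdn_gt0 G0.
have eG : Gj = Gj %/ g * g by rewrite divnK // dvdn_gcdl.
set q := Gj %/ g in hy eG.
set X := B %/ Gj.
have X1 : 0 < X by rewrite divn_gt0.
have hq : q * X <= B %/ g.
  by rewrite leq_divRL // mulnAC -eG mulnC leq_divM.
clear eG; move: hq hy X1; move: (B %/ g) q X => Y Q Z.
nia.
Qed.

Lemma ar1 (p1 c0a Bf1 t yB Bf0 ya : nat) :
  p1 + c0a + Bf1 <= t -> yB + Bf0 <= Bf1 -> ya <= yB -> c0a + ya <= t.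
Proof. lia. Qed.

Lemma ar2 (x1 na x2 yB Bf1 Bf0 t : nat) :
  x1 + na <= x2 + yB -> x2 + Bf1 <= t -> yB + Bf0 <= Bf1 -> x1 + Bf0 <= t - na.
Proof. lia. Qed.


Section Build.
Variables (V : finType) (E : rel V) (w : V -> nat) (l : nat) (lay : V -> 'I_l) (k B : nat).
Hypothesis Hlay : forall u v, E u v -> lay v < lay u.
Hypothesis Hw : forall u v, lay u = lay v -> w u = w v.
Hypothesis Hsize : forall i : 'I_l, k <= #|[set v | lay v == i]|.
Hypothesis HB : forall v, wsum w (reach E v) <= B.
Hypothesis Hk : B * B <= k.

Definition L j := [set v | lay v < j].
Definition Lay j := [set v | (lay v : nat) == j].
Definition G j := \big[gcdn/0]_(v | lay v < j) w v.
Definition f j := B %/ G j - 1.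

Lemma connect_lay v u : connect E v u -> u = v \/ lay u < lay v.
Proof.
move/connectP => [p pth ->] {u}.
elim: p v pth => [|x p IH] v /=; first by left.
move/andP => [evx pth]; right.
case: (IH x pth) => [->|H]; first exact: Hlay.
exact: ltn_trans H (Hlay evx).
Qed.

Lemma reach_sub (S : {set V}) v : closed_set E S -> v \in S -> reach E v \subset S.
Proof.
move=> HS Hv; apply/subsetP => u; rewrite inE => /connectP [p pth ->].
elim: p v pth Hv => [|x p IH] v //= /andP [evx pth] Hv.
exact: IH pth (HS _ _ evx Hv).
Qed.

Lemma closed_reach v : closed_set E (reach E v).
Proof. by move=> x y exy; rewrite !inE => cx; exact: connect_trans cx (connect1 exy). Qed.

Lemma closed_L j : closed_set E (L j).
Proof. by move=> x y exy; rewrite !inE => H; exact: ltn_trans (Hlay exy) H. Qed.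

Lemma closedU (A C : {set V}) : closed_set E A -> closed_set E C -> closed_set E (A :|: C).
Proof.
move=> hA hC x y exy; rewrite !inE => /orP [xA|xC].
  by rewrite (hA _ _ exy xA).
by rewrite (hC _ _ exy xC) orbT.
Qed.

Lemma closedI (A C : {set V}) : closed_set E A -> closed_set E C -> closed_set E (A :&: C).
Proof.
move=> hA hC x y exy; rewrite !inE => /andP [xA xC].
by rewrite (hA _ _ exy xA) (hC _ _ exy xC).
Qed.

Lemma closed_cl (Y : {set V}) : closed_set E (\bigcup_(v in Y) reach E v).
Proof.
move=> x y exy /bigcupP [v vY xv]; apply/bigcupP; exists v => //.
exact: closed_reach exy xv.
Qed.

Lemma w_le_B v : w v <= B.
Proof.
apply: leq_trans (HB v); rewrite /wsum (bigD1 v) ?inE ?connect0 //=.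
exact: leq_addr.
Qed.

Lemma wsum_split (A C : {set V}) : wsum w A = wsum w (A :&: C) + wsum w (A :\: C).
Proof. exact: big_setID. Qed.

Lemma wsum_dec (j a : nat) (X : {set V}) : (forall v, v \in Lay j -> w v = a) -> X \subset L j.+1 ->
  wsum w X = wsum w (X :&: L j) + #|X :&: Lay j| * a.
Proof.
move=> Ha XL; rewrite (wsum_split X (L j)); congr addn.
have -> : X :\: L j = X :&: Lay j.
  apply/setP => v; rewrite !inE; case vX: (v \in X); rewrite ?andbF //=.
  move: (subsetP XL v vX); rewrite inE ltnS.
  by case: ltngtP.
rewrite /wsum (eq_bigr (fun _ => a)) ?sum_nat_const // => v; rewrite inE => /andP [_]; exact: Ha.
Qed.

Lemma G0 : G 0 = 0.
Proof. by rewrite /G big_pred0. Qed.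

Lemma G_dvd j v : lay v < j -> G j %| w v.
Proof. by move=> h; apply: (biggcdn_inf v). Qed.

Lemma G_zero j v : G j = 0 -> lay v < j -> w v = 0.
Proof. by move=> h0 hv; have := G_dvd hv; rewrite h0 dvd0n => /eqP. Qed.

Lemma G_le_B j : 0 < G j -> G j <= B.
Proof.
move=> h.
case: (boolP [exists v, (lay v < j) && (0 < w v)]) => [/existsP [v /andP [hv wv]] | hn].
  exact: leq_trans (dvdn_leq wv (G_dvd hv)) (w_le_B v).
move: h; rewrite /G big1 // => v hv.
by move/existsPn: hn => /(_ v); rewrite hv /= lt0n negbK => /eqP.
Qed.


Lemma lay_w j v0 v : v0 \in Lay j -> v \in Lay j -> w v = w v0.
Proof.
rewrite !inE => /eqP e0 /eqP e; apply: Hw; apply: val_inj; by rewrite /= e e0.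
Qed.

Lemma G_step j v0 : v0 \in Lay j -> G j.+1 = gcdn (G j) (w v0).
Proof.
move=> h0; apply/esym; apply: gcdn_def.
- by apply/dvdn_biggcdP => v hv; apply: G_dvd; exact: ltnW.
- by apply: G_dvd; move: h0; rewrite inE => /eqP ->.
- move=> d dG da; apply/dvdn_biggcdP => v; rewrite ltnS leq_eqVlt => /orP [e | hv].
    by rewrite (@lay_w j v0 v) // inE.
  exact: dvdn_trans dG (G_dvd hv).
Qed.

Lemma wsum0 (C : {set V}) : wsum w C <= 0 -> wsum w C = 0.
Proof. by rewrite leqn0 => /eqP. Qed.

Lemma build j : j <= l -> forall (C : {set V}) t, closed_set E C -> C \subset L j ->
  G j %| t -> t <= k -> wsum w C + B * f j <= t ->
  exists S : {set V}, [/\ closed_set E S, C \subset S, S \subset L j & wsum w S = t].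
Proof.
elim: j => [|j IH] jl C t cC CL Gt tk slack.
  rewrite G0 dvd0n in Gt; move/eqP: Gt => Gt; subst t.
  exists C; split => //; apply: wsum0; exact: leq_trans (leq_addr _ _) slack.
case: (posnP t) => [t0|tpos].
  subst t; exists C; split => //.
  apply: wsum0; exact: leq_trans (leq_addr _ _) slack.
have jl' : j < l := jl.
have : 0 < #|[set v | lay v == Ordinal jl']| by apply: leq_trans (Hsize _); apply: leq_trans tk.
case/card_gt0P => v0; rewrite inE => /eqP e0.
have v0L : v0 \in Lay j by rewrite inE e0.
set a := w v0.
have HaL : forall v, v \in Lay j -> w v = a by move=> v hv; exact: lay_w v0L hv.
have Gs : G j.+1 = gcdn (G j) a := G_step v0L.
set c0 := #|C :&: Lay j|.
have hdecC := wsum_dec HaL CL.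
have c0a : c0 * a <= t by apply: leq_trans slack; rewrite hdecC -addnA addnC -addnA leq_addr.
have cardLay : k <= #|Lay j|.
  apply: leq_trans (Hsize (Ordinal jl')) _; apply: eq_leq; apply: eq_card => v.
  by rewrite !inE.
have cardD : #|Lay j :\: C| = #|Lay j| - c0 by rewrite cardsD setIC.
have [n [c0n nta nD Gdv Q]] : exists n, [/\ c0 <= n, n * a <= t, n - c0 <= #|Lay j :\: C|,
   G j %| t - n * a &
   forall C' : {set V}, C' \subset L j -> wsum w C' + n * a <= wsum w C + (n - c0) * B ->
     wsum w C' + B * f j <= t - n * a].
  case: (posnP (G j)) => [Gj0 | Gjpos].
    rewrite Gs Gj0 gcd0n in Gt.
    have apos : 0 < a by case: (posnP a) Gt => [->|//]; rewrite dvd0n => /eqP t0; move: tpos; rewrite t0.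
    exists (t %/ a); split.
    - by rewrite leq_divRL.
    - by rewrite divnK.
    - rewrite cardD; apply: leq_sub2r; apply: leq_trans cardLay.
      exact: leq_trans (leq_div _ _) tk.
    - by rewrite divnK // subnn dvdn0.
    - move=> C' C'L _; rewrite divnK // subnn /f Gj0 divn0 muln0 addn0.
      rewrite /wsum big1 // => v vC'; apply: (G_zero Gj0).
      by move: (subsetP C'L v vC'); rewrite inE.
  have Gt' : gcdn (G j) a %| t by rewrite -Gs.
  have [y [hy hmod]] := arith c0 Gjpos Gt'.
  have hf : y + f j <= f j.+1 by rewrite /f Gs; apply: arith2 => //; exact: G_le_B.
  have aB : a <= B := w_le_B v0.
  have hBf : B * (y + f j) <= B * f j.+1 by rewrite leq_mul2l hf orbT.
  have ya : y * a <= y * B by rewrite leq_mul2l aB orbT.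
  have nta : (c0 + y) * a <= t.
    move: slack hBf; rewrite hdecC mulnDl mulnDr [B * y]mulnC => s1 s2.
    exact: ar1 s1 s2 ya.
  exists (c0 + y); split.
  - exact: leq_addr.
  - exact: nta.
  - rewrite addKn cardD; case: (posnP a) => [a0 | apos].
      by move: hy; rewrite a0 gcdn0 divnn Gjpos ltnS leqn0 => /eqP ->.
    apply: (@leq_trans (c0 + y - c0)); first by rewrite addKn.
    apply: leq_sub2r; apply: leq_trans cardLay; apply: leq_trans tk.
    apply: leq_trans nta; exact: leq_pmulr.
  - by rewrite -eqn_mod_dvd // eq_sym hmod.
  - move=> C' _ hC'; rewrite addKn in hC'.
    move: hBf; rewrite mulnDr [B * y]mulnC => hBf.
    exact: ar2 hC' slack hBf.
have [Y [YD cY]] := sub_card nD.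
have YLay : Y \subset Lay j by apply: subset_trans YD (subsetDl _ _).
have YC : [disjoint Y & C].
  rewrite -setI_eq0; apply/eqP/setP => u; rewrite !inE.
  by apply/negbTE/negP => /andP [uY uC]; move: (subsetP YD u uY); rewrite !inE uC.
set cl := \bigcup_(v in Y) reach E v.
set C2 := C :|: cl.
set C1 := C2 :&: L j.
have cC2 : closed_set E C2 := closedU cC (@closed_cl Y).
have LLj : L j \subset L j.+1 by apply/subsetP => u; rewrite !inE => /ltnW.
have C2L : C2 \subset L j.+1.
  rewrite subUset CL /=; apply/bigcupsP => v vY; apply: reach_sub (@closed_L j.+1) _.
  by move: (subsetP YLay v vY); rewrite !inE => /eqP ->.
have eC2 : C2 :&: Lay j = (C :&: Lay j) :|: Y.
  apply/setP => u; rewrite !inE; apply/idP/idP.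
    case/andP => /orP [uC | /bigcupP [v vY uv]] uL; first by rewrite uC uL.
    move: uv; rewrite inE => /connect_lay [->|]; first by rewrite vY orbT.
    by move: (subsetP YLay v vY) uL; rewrite !inE => /eqP -> /eqP ->; rewrite ltnn.
  case/orP => [/andP [-> ->] // | uY].
  move: (subsetP YLay u uY); rewrite inE => ->; rewrite andbT.
  apply/orP; right; apply/bigcupP; exists u => //.
  by rewrite inE connect0.
have cardC2 : #|C2 :&: Lay j| = n.
  rewrite eC2 cardsU cY.
  have -> : (C :&: Lay j) :&: Y = set0.
    apply/setP => u; rewrite !inE; apply/negbTE/negP => /andP [/andP [uC _] uY].
    by move: (subsetP YD u uY); rewrite !inE uC.
  by rewrite cards0 subn0 -/c0 subnKC.
have hdec2 : wsum w C2 = wsum w C1 + n * a by rewrite (wsum_dec HaL C2L) cardC2.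
have hw2 : wsum w C2 <= wsum w C + (n - c0) * B.
  apply: leq_trans (wsum_U w C cl) _; rewrite leq_add2l -cY.
  apply: leq_trans (wsum_bigcup w Y (reach E)) _.
  rewrite -sum_nat_const; exact: leq_sum.
have C1L : C1 \subset L j by exact: subsetIr.
have [S' [cS' C1S' S'L wS']] := IH (ltnW jl) C1 (t - n * a) (closedI cC2 (@closed_L j)) C1L Gdv
   (leq_trans (leq_subr _ _) tk) (Q C1 C1L ltac:(by rewrite -hdec2)).
exists (S' :|: C2); split.
- exact: closedU cS' cC2.
- by apply: subset_trans (subsetUr _ _); exact: subsetUl.
- by rewrite subUset C2L andbT; exact: subset_trans S'L LLj.
have SL : S' :|: C2 \subset L j.+1 by rewrite subUset C2L andbT; exact: subset_trans S'L LLj.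
rewrite (wsum_dec HaL SL).
have -> : (S' :|: C2) :&: L j = S'.
  apply/setP => u; rewrite !inE; apply/idP/idP.
    case/andP => /orP [// | uC2 uL]; apply: (subsetP C1S'); by rewrite !inE uC2.
  by move=> uS; rewrite uS /=; move: (subsetP S'L u uS); rewrite inE.
have -> : (S' :|: C2) :&: Lay j = C2 :&: Lay j.
  apply/setP => u; rewrite !inE; case uL: (lay u == j :> nat); rewrite ?andbF //= !andbT.
  case uS: (u \in S') => //=; move: (subsetP S'L u uS); rewrite inE (eqP uL) ltnn.
  by [].
by rewrite cardC2 wS' subnK.
Qed.

End Build.


Theorem mainTheorem2 (V : finType) (E : rel V) (w : V -> nat)
    (l : nat) (lay : V -> 'I_l) (wl : 'I_l -> nat) (k : nat) :
  frobenius_instance E w lay wl k ->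
  (exists S : {set V}, closed_set E S /\ wsum w S = k) <->
  (\big[gcdn/0]_(i < l) wl i %| k).
Proof.
move=> [P1 [P2 [P3 P4]]]; split.
  case=> S [_ <-]; rewrite /wsum; apply: dvdn_sum => v _; rewrite P1.
  exact: (biggcdn_inf (lay v)).
move=> Hd; case: (posnP k) => [k0|kpos].
  exists set0; split; first by move=> u v _; rewrite inE.
  by rewrite k0 /wsum big_set0.
have Hw : forall u v, lay u = lay v -> w u = w v by move=> u v e; rewrite !P1 e.
set B := \max_v wsum w (reach E v).
have HB : forall v, wsum w (reach E v) <= B.
  move=> v; rewrite /B. exact: (@leq_bigmax V (fun v => wsum w (reach E v)) v).
have Hk : B * B <= k.
  case: (pickP (fun _ : V => true)) => [v0 _ | none].
    rewrite /B (bigmax_eq_arg v0) //.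
    set v1 := [arg max_(i > v0 | _) _].
    apply: leq_trans (P4 v1); rewrite mulnn mul2n -addnn; exact: leq_addr.
  by rewrite /B big1 // => v; have := none v.
have Gdiv : G w lay l %| k.
  apply: dvdn_trans Hd; apply/dvdn_biggcdP => i _.
  have : 0 < #|[set v | lay v == i]| by apply: leq_trans (P3 i).
  case/card_gt0P => v; rewrite inE => /eqP e.
  rewrite -e -P1; exact: (biggcdn_inf v).
have slack : wsum w set0 + B * f w lay B l <= k.
  rewrite /wsum big_set0 add0n; apply: leq_trans Hk.
  rewrite leq_mul2l; apply/orP; right; rewrite /f.
  exact: leq_trans (leq_subr _ _) (leq_div _ _).
have cl0 : closed_set E set0 by move=> u v _; rewrite inE.
have [S [cS _ _ wS]] := build P2 Hw P3 HB (leqnn l) cl0 (sub0set _) Gdiv (leqnn k) slack.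
by exists S.
Qed.
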